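(* Let $p$ and $q$ be distinct primes and let $a,b$ be positive integers. Then \[ B(p^{a}q^{b}) \;\ge\; \min\{p^{a},\,q^{b}\}. \]
   Context: The height $H(f)$ of a polynomial $f\in\mathbb{Z}[x]$ is the maximum of the absolute values of its coefficients. For a positive integer $n$, $B(n)=\max\{H(f): f\in\mathbb{Z}[x],\ f \text{ divides } x^n-1 \text{ in } \mathbb{Z}[x]\}$. *)

(* Defs.v *)
From HB Require Import structures.
From mathcomp Require Import all_boot all_order all_algebra.
Set Implicit Arguments. Unset Strict Implicit. Unset Printing Implicit Defensive.
Import Order.TTheory GRing.Theory Num.Theory.

Definition height (f : {poly int}) : nat := \max_(i < size f) `|(f`_i)%R|%N.

Definition dvd_Zx (f g : {poly int}) : Prop := exists h : {poly int}, g = (f * h)%R.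

(* B(n) >= m, i.e. some divisor of x^n - 1 in Z[x] has height >= m. *)
Definition B_ge (n m : nat) : Prop :=
  exists f : {poly int}, dvd_Zx f ('X^n - 1)%R /\ (m <= height f)%N.

(* Main.v *)
Require Import Defs.
From mathcomp Require Import all_boot all_order all_algebra.
Set Implicit Arguments. Unset Strict Implicit. Unset Printing Implicit Defensive.
Import Order.TTheory GRing.Theory Num.Theory.

Section Alg.
Variable R : comNzRingType.
Local Open Scope ring_scope.

Definition S (x : R) (n : nat) := \sum_(i < n) x ^+ i.

Lemma geomS (x : R) n : (x - 1) * S x n = x ^+ n - 1.
Proof.
rewrite /S; elim: n => [|n IH]; first by rewrite big_ord0 mulr0 expr0 subrr.
rewrite big_ord_recr /= mulrDr IH mulrBl mul1r -exprS.
by rewrite addrC addrA subrK.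
Qed.

Lemma geomM (x : R) m n : x ^+ (m * n) - 1 = (x ^+ m - 1) * \sum_(i < n) x ^+ (m * i).
Proof.
rewrite exprM -geomS /S; congr (_ * _); apply: eq_bigr => i _; by rewrite exprM.
Qed.

Lemma key (x : R) m n : (0 < n)%N -> coprime n m ->
  exists h, \sum_(i < n) x ^+ (m * i) = S x n * h.
Proof.
move=> n0 co.
pose f (i : 'I_n) : 'I_n := Ordinal (ltn_pmod (m * i) n0).
have finj : injective f.
  have aux : forall i j : 'I_n, (i <= j)%N -> f i = f j -> i = j.
    move=> i j le /(congr1 val) /= e; apply/val_inj => /=.
    apply/eqP; rewrite eqn_leq le /=.
    have: (m * i == m * j %[mod n]) by apply/eqP.
    rewrite eq_sym eqn_mod_dvd ?leq_mul2l ?le ?orbT // -mulnBr Gauss_dvdr //.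
    move=> d; rewrite -subn_eq0; apply/negPn/negP => nz.
    have := @dvdn_leq n (j - i); rewrite lt0n nz d => /(_ isT isT).
    have : (j - i < n)%N by apply: leq_ltn_trans (leq_subr _ _) (ltn_ord j).
    by move=> lt le'; move: (leq_trans lt le'); rewrite ltnn.
  move=> i j e; case: (leqP i j) => [le|lt]; first exact: aux.
  by apply/esym/aux => //; apply: ltnW.
exists (1 + \sum_(i < n) x ^+ (m * i %% n) * (x - 1) * \sum_(k < (m * i %/ n)) x ^+ (n * k)).
rewrite mulrDr mulr1 mulr_sumr.
have Sd : S x n = \sum_(i < n) x ^+ (m * i %% n).
  by rewrite /S (reindex_inj finj).
rewrite {1}Sd.
rewrite -big_split /=; apply: eq_bigr => i _.
rewrite -!mulrA mulrCA mulrA -mulrA [X in _ * X]mulrA [S x n * _]mulrC geomS -geomM.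
rewrite mulrBr mulr1 -exprD addrC subrK; congr (_ ^+ _).
by rewrite addnC [(n * _)%N]mulnC -divn_eq.
Qed.
End Alg.

Local Open Scope ring_scope.

Lemma coefS n k : (S ('X : {poly int}) n)`_k = (k < n)%N%:R.
Proof.
rewrite /S; elim: n => [|n IH]; first by rewrite big_ord0 coef0.
rewrite big_ord_recr /= coefD IH coefXn [in RHS]ltnS [in RHS]leq_eqVlt.
by case: (ltngtP k n) => //= _; rewrite ?addr0 ?add0r.
Qed.

Lemma gen (P Q : nat) : (0 < P)%N -> (0 < Q)%N -> coprime P Q ->
  B_ge (P * Q)%N (minn P Q).
Proof.
wlog le : P Q / (P <= Q)%N.
  move=> H P0 Q0 co; case: (boolP (P <= Q)%N) => [l|]; first exact: (H P Q l P0 Q0 co).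
  rewrite -ltnNge => l; rewrite mulnC minnC; apply: (H Q P (ltnW l) Q0 P0); by rewrite coprime_sym.
move=> P0 Q0 co.
have co' : coprime Q P by rewrite coprime_sym.
have [h Hh] := key ('X : {poly int}) Q0 co'.
exists (S 'X P * S 'X Q); split.
  exists (('X - 1) * h).
  rewrite geomM Hh -geomS !mulrA; congr (_ * _).
  by rewrite [RHS]mulrC mulrA.
rewrite (minn_idPl le).
set f := S 'X P * S 'X Q.
have hc : f`_P.-1 = P%:R.
  rewrite /f coefM prednK //.
  rewrite (eq_bigr (fun _ => 1)); last first.
    move=> j _; rewrite !coefS ltn_ord.
    have -> : (P.-1 - j < Q)%N.
      apply: leq_ltn_trans (leq_subr _ _) _.
      by apply: leq_trans le; rewrite prednK.
    by rewrite mulr1.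
  by rewrite sumr_const card_ord.
have hs : (P.-1 < size f)%N.
  rewrite ltnNge; apply/negP => H.
  move: hc; rewrite nth_default // => /eqP; rewrite eq_sym pnatr_eq0.
  by move/eqP => P0e; rewrite P0e in P0.
rewrite /height.
have -> : P = absz (f`_(Ordinal hs)) by rewrite /= hc natz.
exact: (@leq_bigmax_cond _ xpredT (fun i : 'I_(size f) => absz (f`_i)) (Ordinal hs)).
Qed.

Theorem mainTheorem2 (p q a b : nat) :
  prime p -> prime q -> p != q -> (0 < a)%N -> (0 < b)%N ->
  B_ge (p ^ a * q ^ b) (minn (p ^ a) (q ^ b)).
Proof.
move=> pp qp pq a0 b0.
apply: gen; rewrite ?expn_gt0 ?prime_gt0 //.
rewrite coprime_pexpl // coprime_pexpr // prime_coprime // dvdn_prime2 //.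
Qed.
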